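(* Let $X$ be an $n$-dimensional polyhedral normed space. Suppose that $Y \subseteq X$ is a $k$-dimensional subspace, $1 \leq k \leq n-1$, which is in general position and satisfies $\lambda(Y, X)=1$. Then there is a unique projection $P: X \to Y$ with $\|P\|=1$.
   Context: A normed space $X=(\mathbb{R}^n,\|\cdot\|)$ is polyhedral if its unit ball $B_X$ is a convex polytope; write $\mathrm{ext}\, B_X=\{x_1,\dots,x_N\}$ and $\mathrm{ext}\, B_{X^*}=\{f_1,\dots,f_M\}$ for the extreme points of the unit balls of $X$ and $X^*$. Two linear subspaces $Y,Z\subseteq\mathbb{R}^n$ are in general position if $\dim \mathrm{lin}(Y\cup Z)=\min(\dim Y+\dim Z,n)$. A subspace $Y$ is in general position if it is in general position with every subspace $\mathrm{lin}\{x_i : i\in I\}$, $I\subseteq\{1,\dots,N\}$, and every subspace $\bigcap_{i\in I}\ker f_i$, $I\subseteq\{1,\dots,M\}$. A projection onto $Y$ is a linear $P:X\to Y$ with $P|_Y=\mathrm{id}_Y$, and $\lambda(Y,X)$ is the infimum of the operator norms of such projections. *)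

(* Defs.v *)
From HB Require Import structures.
From mathcomp Require Import all_boot all_order all_algebra.
From mathcomp Require Import boolp classical_sets reals.
Set Implicit Arguments. Unset Strict Implicit. Unset Printing Implicit Defensive.
Import Order.TTheory GRing.Theory Num.Theory.
Local Open Scope ring_scope.
Local Open Scope classical_set_scope.

(* Vectors of R^n are row vectors 'rV[R]_n; a linear functional on R^n is
   also represented by a row vector f, acting by x |-> <x, f>. *)
Definition app (R : realType) (n : nat) (f x : 'rV[R]_n) : R :=
  \sum_(i < n) x 0 i * f 0 i.

Definition is_norm (R : realType) (n : nat) (N : 'rV[R]_n -> R) : Prop :=
  [/\ forall x, 0 <= N x,
      forall x, N x = 0 -> x = 0,
      forall (a : R) x, N (a *: x) = `|a| * N x &
      forall x y, N (x + y) <= N x + N y].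

Definition unit_ball (R : realType) (n : nat) (N : 'rV[R]_n -> R) :
  set 'rV[R]_n := [set x | N x <= 1].

Definition dual_unit_ball (R : realType) (n : nat) (N : 'rV[R]_n -> R) :
  set 'rV[R]_n := [set f | forall x, N x <= 1 -> `|app f x| <= 1].

Definition conv_hull (R : realType) (n m : nat) (v : 'I_m -> 'rV[R]_n) :
  set 'rV[R]_n :=
  [set x | exists w : 'I_m -> R,
     [/\ forall i, 0 <= w i, \sum_(i < m) w i = 1 &
         x = \sum_(i < m) w i *: v i]].

Definition extreme (R : realType) (n : nat) (S : set 'rV[R]_n) (x : 'rV[R]_n)
  : Prop :=
  S x /\ forall y z (t : R), S y -> S z -> 0 < t < 1 ->
          x = t *: y + (1 - t) *: z -> y = z.

Definition polyhedral (R : realType) (n : nat) (N : 'rV[R]_n -> R) : Prop :=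
  exists m (v : 'I_m -> 'rV[R]_n), unit_ball N = conv_hull v.

(* Subspaces are represented as row spaces of matrices (mxalgebra).
   General position of two subspaces. *)
Definition gen_pos2 (R : realType) (n p q : nat)
  (Y : 'M[R]_(p, n)) (Z : 'M[R]_(q, n)) : Prop :=
  \rank (Y + Z)%MS = minn (\rank Y + \rank Z) n.

Definition span_of (R : realType) (n m : nat) (v : 'I_m -> 'rV[R]_n) :
  'M[R]_(m, n) := \matrix_(i < m, j < n) v i 0 j.

Definition ker_of (R : realType) (n m : nat) (f : 'I_m -> 'rV[R]_n) :
  'M[R]_n := kermx (span_of f)^T.

Definition in_general_position (R : realType) (n p : nat)
  (N : 'rV[R]_n -> R) (Y : 'M[R]_(p, n)) : Prop :=
  (forall m (v : 'I_m -> 'rV[R]_n), (forall i, extreme (unit_ball N) (v i)) ->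
       gen_pos2 Y (span_of v)) /\
  (forall m (f : 'I_m -> 'rV[R]_n),
       (forall i, extreme (dual_unit_ball N) (f i)) ->
       gen_pos2 Y (ker_of f)).

Definition is_projection (R : realType) (n p : nat) (Y : 'M[R]_(p, n))
  (P : 'M[R]_n) : Prop :=
  (P <= Y)%MS /\ forall y : 'rV[R]_n, (y <= Y)%MS -> y *m P = y.

Definition op_norm (R : realType) (n : nat) (N : 'rV[R]_n -> R)
  (P : 'M[R]_n) : R :=
  sup [set N (x *m P) | x in unit_ball N].

Definition proj_const (R : realType) (n p : nat) (N : 'rV[R]_n -> R)
  (Y : 'M[R]_(p, n)) : R :=
  inf [set op_norm N P | P in is_projection Y].

(* Main.v *)
Require Import Defs.
From HB Require Import structures.
From mathcomp Require Import all_boot all_order all_algebra.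
From mathcomp Require Import boolp classical_sets reals.
From mathcomp Require Import topology normedtype derive.
From mathcomp Require Import lra zify.
Set Implicit Arguments. Unset Strict Implicit. Unset Printing Implicit Defensive.
Import Order.TTheory GRing.Theory Num.Theory numFieldNormedType.Exports.
Local Open Scope ring_scope.
Local Open Scope classical_set_scope.
Section Norm.
Variables (R : realType) (n : nat) (N : 'rV[R]_n -> R).
Hypothesis hN : is_norm N.

Lemma N_ge0 x : 0 <= N x. Proof. by case: hN. Qed.
Lemma N_eq0 x : N x = 0 -> x = 0. Proof. by case: hN => _ H _ _; apply: H. Qed.
Lemma NZ a x : N (a *: x) = `|a| * N x. Proof. by case: hN => _ _ H _; apply: H. Qed.
Lemma N_tri x y : N (x + y) <= N x + N y. Proof. by case: hN => _ _ _ H; apply: H. Qed.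
Lemma N0 : N 0 = 0.
Proof. by have := NZ 0 0; rewrite scale0r normr0 mul0r. Qed.
Lemma NN x : N (- x) = N x.
Proof. by rewrite -scaleN1r NZ normrN normr1 mul1r. Qed.
Lemma NZp a x : 0 <= a -> N (a *: x) = a * N x.
Proof. by move=> a0; rewrite NZ ger0_norm. Qed.
Lemma N_sum (I : finType) (F : I -> 'rV[R]_n) :
  N (\sum_i F i) <= \sum_i N (F i).
Proof.
apply: (big_ind2 (fun x y => N x <= y)); first by rewrite N0.
  by move=> x1 x2 y1 y2 h1 h2; apply: le_trans (N_tri _ _) _; apply: lerD.
by [].
Qed.
Lemma N_neq0 x : x != 0 -> N x != 0.
Proof. by move=> hx; apply/eqP => /N_eq0 /eqP; apply/negP. Qed.
Lemma N_gt0 x : x != 0 -> 0 < N x.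
Proof. by move=> hx; rewrite lt_def N_neq0 // N_ge0. Qed.

Definition fv (u : 'cV[R]_n) (x : 'rV[R]_n) : R := (x *m u) 0 0.
Lemma fvD u x y : fv u (x + y) = fv u x + fv u y.
Proof. by rewrite /fv mulmxDl mxE. Qed.
Lemma fvZ u a x : fv u (a *: x) = a * fv u x.
Proof. by rewrite /fv -scalemxAl mxE. Qed.
Lemma fvN u x : fv u (- x) = - fv u x.
Proof. by rewrite /fv mulNmx mxE. Qed.
Lemma fvB u x y : fv u (x - y) = fv u x - fv u y.
Proof. by rewrite fvD fvN. Qed.
Lemma fv0 u : fv u 0 = 0.
Proof. by rewrite /fv mul0mx mxE. Qed.
Lemma fv_sum u (I : finType) (F : I -> 'rV[R]_n) :
  fv u (\sum_i F i) = \sum_i fv u (F i).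
Proof. by rewrite /fv mulmx_suml summxE. Qed.
Lemma fvuD u h x : fv (u + h) x = fv u x + fv h x.
Proof. by rewrite /fv mulmxDr mxE. Qed.
Lemma fvuZ a h x : fv (a *: h) x = a * fv h x.
Proof. by rewrite /fv -scalemxAr mxE. Qed.

Lemma sep_h p (W : 'M[R]_(p, n)) z : ~~ (z <= W)%MS ->
  exists h : 'cV_n, W *m h = 0 /\ fv h z = 1.
Proof.
rewrite submxE => nz.
have [j hj] : exists j, (z *m cokermx W) 0 j != 0.
  apply/existsP; apply: contraNT nz; rewrite negb_exists => /forallP H.
  apply/eqP/matrixP => i k; rewrite ord1 [RHS]mxE.
  by move: (H k); rewrite negbK => /eqP.
set a := (z *m cokermx W) 0 j.
exists (cokermx W *m (a^-1 *: delta_mx j 0)).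
split; first by rewrite mulmxA mulmx_coker mul0mx.
rewrite /fv mulmxA -scalemxAr [LHS]mxE -colE [col _ _ _ _]mxE mulVf //.
Qed.

Lemma sub_rank1 (y x : 'rV[R]_n) : (x <= y)%MS -> exists t : R, x = t *: y.
Proof.
move=> /submxP [b ->]; exists (b 0 0).
by rewrite {1}[b]mx11_scalar mul_scalar_mx.
Qed.

Lemma HB_full p (W : 'M[R]_(p, n)) u : row_full W ->
  (forall x, (x <= W)%MS -> fv u x <= N x) ->
  exists u', (forall x, (x <= W)%MS -> fv u' x = fv u x) /\ forall x, fv u' x <= N x.
Proof. by move=> hf hu; exists u; split => // x; apply: hu; apply: submx_full. Qed.

Lemma HB_ext r : forall p (W : 'M[R]_(p, n)) (u : 'cV_n), (n - \rank W <= r)%N ->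
  (forall x, (x <= W)%MS -> fv u x <= N x) ->
  exists u', (forall x, (x <= W)%MS -> fv u' x = fv u x) /\ forall x, fv u' x <= N x.
Proof.
elim: r => [|r IH] p W u hr hu.
  apply: HB_full hu; rewrite /row_full eqn_leq rank_leq_col /=.
  by move: hr; rewrite leqn0 subn_eq0.
have [hf|hnf] := boolP (row_full W); first exact: HB_full hu.
have [i hi] : exists i, ~~ (row i (1%:M : 'M[R]_n) <= W)%MS.
  apply/existsP; apply: contraNT hnf; rewrite negb_exists => /forallP H.
  rewrite -sub1mx; apply/row_subP => k; move: (H k); by rewrite negbK.
set z := row i (1%:M : 'M[R]_n).
have [h [hW hz]] := sep_h hi.
set S := [set fv u x - N (x - z) | x in [set x | (x <= W)%MS]].
have hS0 : S !=set0 by exists (fv u 0 - N (0 - z)); exists 0 => //=; exact: sub0mx.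
have hub : forall x2, (x2 <= W)%MS -> ubound S (N (x2 + z) - fv u x2).
  move=> x2 hx2 s [x1 hx1 <-].
  have h12 : fv u (x1 + x2) <= N (x1 + x2) by apply: hu; apply: addmx_sub.
  have := N_tri (x1 - z) (x2 + z).
  rewrite (_ : x1 - z + (x2 + z) = x1 + x2); last by rewrite addrCA subrK addrC.
  rewrite fvD in h12. move=> ht. lra.
set c := sup S.
have c_lb : forall x1, (x1 <= W)%MS -> fv u x1 - N (x1 - z) <= c.
  move=> x1 hx1; apply: ub_le_sup; last by exists x1.
  by exists (N (0 + z) - fv u 0); apply: hub; exact: sub0mx.
have c_ub : forall x2, (x2 <= W)%MS -> c <= N (x2 + z) - fv u x2.
  by move=> x2 hx2; apply: ge_sup hS0 (hub x2 hx2).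
set u' := u + (c - fv u z) *: h.
have hWh : forall x, (x <= W)%MS -> fv h x = 0.
  by move=> x /submxP [a ->]; rewrite /fv -mulmxA hW mulmx0 mxE.
have hu'W : forall x, (x <= W)%MS -> fv u' x = fv u x.
  by move=> x hx; rewrite fvuD fvuZ hWh // mulr0 addr0.
have hu'z : fv u' z = c by rewrite fvuD fvuZ hz mulr1 addrC subrK.
have hlt : (\rank W < \rank (W + z)%MS)%N.
  have : (W < W + z)%MS.
    rewrite ltmxE addsmxSl /=; apply: contra hi => H.
    exact: submx_trans (addsmxSr W z) H.
  by rewrite ltmxErank => /andP [].
have [u'' [h1 h2]] : exists u'', (forall x, (x <= (W + z)%MS)%MS -> fv u'' x = fv u' x)
     /\ forall x, fv u'' x <= N x.
  apply: IH.
    move: hr hlt; have := rank_leq_col (W + z)%MS; lia.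
  move=> x /sub_addsmxP [[a b] /= ->].
  set w := a *m W.
  have hw : (w <= W)%MS by apply: submxMl.
  have [t ->] : exists t, b *m z = t *: z.
    by exists (b 0 0); rewrite {1}[b]mx11_scalar mul_scalar_mx.
  rewrite fvD fvZ hu'W // hu'z.
  case: (boolP (0 < t)) => t0; last case: (boolP (t < 0)) => t1.
  - have := c_ub (t^-1 *: w) (scalemx_sub _ hw).
    rewrite fvZ.
    have -> : t^-1 *: w + z = t^-1 *: (w + t *: z).
      by rewrite scalerDr scalerA mulVf ?gt_eqF // scale1r.
    rewrite NZp; last by rewrite invr_ge0 ltW.
    move=> H. have := ler_wpM2l (ltW t0) H.
    rewrite mulrBr !mulrA mulfV ?gt_eqF // !mul1r. lra.
  - have {t0}t0 := t1.
    have := c_lb ((- t)^-1 *: w) (scalemx_sub _ hw).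
    rewrite fvZ.
    have -> : (- t)^-1 *: w - z = (- t)^-1 *: (w + t *: z).
      rewrite scalerDr scalerA invrN mulNr mulVf ?lt_eqF // scaleN1r.
      by [].
    rewrite NZp; last by rewrite invr_ge0 oppr_ge0 ltW.
    have nt0 : 0 < - t by rewrite oppr_gt0.
    move=> H. have := ler_wpM2l (ltW nt0) H.
    rewrite mulrBr !mulrA mulfV ?gt_eqF // !mul1r. lra.
  - have -> : t = 0 by apply/eqP; rewrite eq_le !leNgt t0 t1.
    by rewrite scale0r addr0 mul0r addr0; apply: hu.
exists u''; split => // x hx.
by rewrite h1 ?hu'W //; apply: submx_trans hx (addsmxSl _ _).
Qed.

Lemma norming (y : 'rV[R]_n) : y != 0 ->
  exists u : 'cV_n, fv u y = N y /\ forall x, fv u x <= N x.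
Proof.
move=> y0.
have [h0 [_ hy]] : exists h : 'cV_n, (0 : 'M[R]_n) *m h = 0 /\ fv h y = 1.
  by apply: sep_h; rewrite submx0.
set u0 := N y *: h0.
have hdom : forall x, (x <= y)%MS -> fv u0 x <= N x.
  move=> x /sub_rank1 [t ->]; rewrite fvZ fvuZ hy mulr1 NZ.
  by apply: ler_wpM2r; [exact: N_ge0|exact: ler_norm].
have [u [h1 h2]] := @HB_ext n 1 y u0 (leq_subr _ _) hdom.
exists u; split => //; rewrite h1 //.
  by rewrite fvuZ hy mulr1.
Qed.

End Norm.
Section Poly.
Variables (R : realType) (n : nat) (N : 'rV[R]_n -> R).
Hypothesis hN : is_norm N.
Variables (m : nat) (v : 'I_m -> 'rV[R]_n).
Hypothesis hball : unit_ball N = conv_hull v.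

Lemma conv_mem x : N x <= 1 -> exists w : 'I_m -> R,
  [/\ forall i, 0 <= w i, \sum_(i < m) w i = 1 & x = \sum_(i < m) w i *: v i].
Proof. move=> hx; have : unit_ball N x by []. by rewrite hball. Qed.

Lemma sum_delta_v i : \sum_(j < m) ((j == i)%:R : R) *: v j = v i.
Proof.
rewrite (bigD1 i) //= eqxx scale1r big1 ?addr0 // => j /negbTE ->.
by rewrite scale0r.
Qed.

Lemma sum_delta i : \sum_(j < m) ((j == i)%:R : R) = 1.
Proof. by rewrite (bigD1 i) //= eqxx big1 ?addr0 // => j /negbTE ->. Qed.

Lemma v_ball i : N (v i) <= 1.
Proof.
have : conv_hull v (v i).
  exists (fun j => ((j == i)%:R : R)); split.
  - by move=> j; rewrite ler0n.
  - exact: sum_delta.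
  - by rewrite sum_delta_v.
by rewrite -hball.
Qed.

Definition G (P : 'M[R]_n) : R := \big[Num.max/0]_(i < m) N (v i *m P).

Lemma G_ge P i : N (v i *m P) <= G P.
Proof. exact: le_bigmax. Qed.

Lemma G_le P c : 0 <= c -> (forall i, N (v i *m P) <= c) -> G P <= c.
Proof. by move=> c0 H; apply: bigmax_le. Qed.

Lemma G_ge0 P : 0 <= G P.
Proof.
apply: (big_ind (fun x => 0 <= x)) => //; last by move=> i _; apply: N_ge0.
by move=> x y hx hy; rewrite le_max hx.
Qed.

Lemma G_attained P : G P = 0 \/ exists i, G P = N (v i *m P).
Proof.
rewrite /G; apply: (big_ind (fun x => x = 0 \/ exists i, x = N (v i *m P))).
- by left.
- move=> x y hx hy; rewrite /Num.max; case: ifP => _; [exact: hy|exact: hx].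
- by move=> i _; right; exists i.
Qed.

Lemma G_ball P x : N x <= 1 -> N (x *m P) <= G P.
Proof.
move=> /conv_mem [w [w0 w1 ->]].
rewrite mulmx_suml; apply: le_trans (N_sum hN _) _.
apply: le_trans (_ : \sum_i w i * G P <= _); last by rewrite -mulr_suml w1 mul1r.
apply: ler_sum => i _; rewrite -scalemxAl NZp //.
by apply: ler_wpM2l => //; apply: G_ge.
Qed.

Lemma G_bound P x : N (x *m P) <= G P * N x.
Proof.
have [->|x0] := eqVneq x 0; first by rewrite mul0mx (N0 hN) mulr0.
have Nx0 := N_gt0 hN x0.
have : N ((N x)^-1 *: x) <= 1.
  rewrite (NZp hN); last by rewrite invr_ge0 ltW.
  by rewrite mulVf ?(N_neq0 hN x0).
move=> /(G_ball P).
rewrite -scalemxAl (NZp hN); last by rewrite invr_ge0 ltW.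
move=> H.
have := ler_wpM2l (ltW Nx0) H.
by rewrite mulrA mulfV ?(N_neq0 hN x0) // mul1r mulrC.
Qed.

Lemma opG P : op_norm N P = G P.
Proof.
rewrite /op_norm; set E := [set _ | _ in _].
have ub : ubound E (G P) by move=> _ [x hx <-]; apply: G_ball.
have mem : E (G P).
  case: (G_attained P) => [->|[i ->]].
  - by exists 0; [rewrite /unit_ball /= (N0 hN) ler01|rewrite mul0mx (N0 hN)].
  - by exists (v i) => //; apply: v_ball.
apply/le_anti/andP; split.
- by apply: ge_sup ub; exists (G P).
- by apply: ub_le_sup => //; exists (G P).
Qed.

End Poly.
Lemma reduce_ext (R : realType) (n : nat) (N : 'rV[R]_n -> R) :
  forall m (v : 'I_m -> 'rV[R]_n), unit_ball N = conv_hull v ->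
  exists m' (v' : 'I_m' -> 'rV[R]_n),
    unit_ball N = conv_hull v' /\ forall i, extreme (unit_ball N) (v' i).
Proof.
elim=> [|m IH] v hb.
  by exists 0%N, v; split => // -[].
case: (pselect (forall i, extreme (unit_ball N) (v i))) => [all|/existsNP [i0 ni0]].
  by exists m.+1, v.
have hx : unit_ball N (v i0) := v_ball hb i0.
have [y [z [t [hy [hz [ht [hxe nyz]]]]]]] : exists y z t, unit_ball N y /\
    unit_ball N z /\ 0 < t < 1 /\ v i0 = t *: y + (1 - t) *: z /\ y <> z.
  apply: contrapT => H; apply: ni0; split => // y z t hy hz ht e.
  apply: contrapT => nyz; apply: H; exists y, z, t; tauto.
have [a [a0 a1 ya]] := conv_mem hb hy.
have [b [b0 b1 zb]] := conv_mem hb hz.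
move: ht => /andP [t0 t1].
set c := fun i => t * a i + (1 - t) * b i.
have c0 : forall i, 0 <= c i.
  move=> i; rewrite /c; apply: addr_ge0; apply: mulr_ge0 => //.
    exact: ltW.
  by rewrite subr_ge0 ltW.
have c1 : \sum_i c i = 1.
  by rewrite /c big_split /= -!mulr_sumr a1 b1 !mulr1 addrC subrK.
have xc : v i0 = \sum_i c i *: v i.
  rewrite hxe ya zb !scaler_sumr -big_split /=; apply: eq_bigr => i _.
  by rewrite /c !scalerA -scalerDl.
have le1 : forall (w : 'I_m.+1 -> R), (forall i, 0 <= w i) -> \sum_i w i = 1 ->
    forall i, w i <= 1.
  move=> w w0 w1 i; rewrite -w1 (bigD1 i) //= lerDl sumr_ge0 //.
have ci0 : c i0 < 1.
  rewrite ltNge; apply/negP => hc.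
  have ha := le1 a a0 a1 i0; have hb' := le1 b b0 b1 i0.
  have p1 : 0 <= t * (1 - a i0) by apply: mulr_ge0; [exact: ltW|rewrite subr_ge0].
  have p2 : 0 <= (1 - t) * (1 - b i0) by apply: mulr_ge0; rewrite subr_ge0 // ltW.
  have e1 : t * (1 - a i0) + (1 - t) * (1 - b i0) = 0.
    apply/eqP; rewrite eq_le; apply/andP; split; last by rewrite addr_ge0.
    move: hc; rewrite /c => hc; lra.
  have [ea eb] : 1 - a i0 = 0 /\ 1 - b i0 = 0.
    move/eqP: e1; rewrite paddr_eq0 //.
    have nt : (1 - t == 0) = false by rewrite subr_eq0 eq_sym (lt_eqF t1).
    by rewrite !mulf_eq0 (gt_eqF t0) nt /= => /andP [/eqP -> /eqP ->].
  have single : forall (w : 'I_m.+1 -> R), (forall i, 0 <= w i) -> \sum_i w i = 1 ->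
      1 - w i0 = 0 -> \sum_i w i *: v i = v i0.
    move=> w w0 w1 e; have wi0 : w i0 = 1 by apply/eqP; rewrite eq_sym -subr_eq0 e.
    have hs : \sum_(i | i != i0) w i = 0.
      move: w1; rewrite (bigD1 i0) //= wi0 => /(congr1 (fun q => q - 1)).
      by rewrite addrC addrK subrr.
    rewrite (bigD1 i0) //= wi0 scale1r big1 ?addr0 // => i hi.
    by rewrite (psumr_eq0P _ hs) ?scale0r // => j _; apply: w0.
  by apply: nyz; rewrite ya zb (single a) // (single b).
set d := fun j : 'I_m => c (lift i0 j) / (1 - c i0).
have hc1 : 1 - c i0 != 0 by rewrite subr_eq0 eq_sym lt_eqF.
have sc : \sum_(j < m) c (lift i0 j) = 1 - c i0.
  by move: c1; rewrite (bigD1_ord i0) //= => <-; rewrite addrC addrK.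
have d0 : forall j, 0 <= d j.
  by move=> j; rewrite /d divr_ge0 //; rewrite subr_ge0 ltW.
have d1 : \sum_j d j = 1.
  by rewrite /d -mulr_suml sc mulfV.
have xd : v i0 = \sum_j d j *: v (lift i0 j).
  have : (1 - c i0) *: v i0 = \sum_j c (lift i0 j) *: v (lift i0 j).
    by rewrite scalerBl scale1r {1}xc (bigD1_ord i0) //= addrC addrK.
  move=> /(congr1 (fun q => (1 - c i0)^-1 *: q)).
  rewrite scalerA mulVf // scale1r => ->.
  rewrite scaler_sumr; apply: eq_bigr => j _; rewrite scalerA /d mulrC.
  by [].
have hb' : unit_ball N = conv_hull (fun j => v (lift i0 j)).
  rewrite hb; apply/seteqP; split => p [w [w0 w1 ->]].
  - exists (fun j => w i0 * d j + w (lift i0 j)); split.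
    + by move=> j; rewrite addr_ge0 // mulr_ge0.
    + rewrite big_split /= -mulr_sumr d1 mulr1.
      by move: w1; rewrite (bigD1_ord i0).
    + rewrite (bigD1_ord i0) //= {1}xd scaler_sumr -big_split /=.
      by apply: eq_bigr => j _; rewrite scalerA scalerDl.
  - exists (fun i => if unlift i0 i is Some j then w j else 0); split.
    + by move=> i; case: (unlift i0 i).
    + rewrite (bigD1_ord i0) //= unlift_none add0r -w1.
      by apply: eq_bigr => j _; rewrite liftK.
    + rewrite (bigD1_ord i0) //= unlift_none scale0r add0r.
      by apply: eq_bigr => j _; rewrite liftK.
exact: IH hb'.
Qed.
Lemma proj_fix (R : realType) (n : nat) (Y P : 'M[R]_n) :
  is_projection Y P -> Y *m P = Y.
Proof.
case=> _ h; apply/row_matrixP => i; rewrite row_mul; apply: h; exact: row_sub.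
Qed.

Lemma proj_sub (R : realType) (n : nat) (Y P : 'M[R]_n) (x : 'rV[R]_n) :
  is_projection Y P -> (x *m P <= Y)%MS.
Proof. by case=> h _; apply: submx_trans (submxMl _ _) h. Qed.

Lemma active (R : realType) (n : nat) (N : 'rV[R]_n -> R) (hN : is_norm N)
  m (v : 'I_m -> 'rV[R]_n) (hb : unit_ball N = conv_hull v)
  (Y P : 'M[R]_n) (y : 'rV[R]_n) (w : 'I_m -> R) (u : 'cV[R]_n) :
  is_projection Y P -> G N v P <= 1 -> (y <= Y)%MS ->
  (forall i, 0 <= w i) -> \sum_i w i = 1 -> y = \sum_i w i *: v i ->
  fv u y = 1 -> (forall x, fv u x <= N x) ->
  forall i, 0 < w i -> fv u (v i *m P) = 1.
Proof.
move=> hP hG hy w0 w1 ey fy hu.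
have le1 : forall i, fv u (v i *m P) <= 1.
  move=> i; apply: le_trans (hu _) _; apply: le_trans (G_ge _ _ _ _) hG.
have hs : \sum_i w i * (1 - fv u (v i *m P)) = 0.
  have : fv u (y *m P) = 1 by case: hP => _ h; rewrite h.
  rewrite ey mulmx_suml fv_sum.
  under eq_bigr do rewrite -scalemxAl fvZ.
  move=> e; under eq_bigr do rewrite mulrBr mulr1.
  by rewrite sumrB w1 e subrr.
move=> i wi.
have h0 : forall j, true -> 0 <= w j * (1 - fv u (v j *m P)).
  by move=> j _; apply: mulr_ge0 => //; rewrite subr_ge0; exact: le1.
have := psumr_eq0P h0 hs (i := i) isT.
by move=> /eqP; rewrite mulf_eq0 (gt_eqF wi) /= subr_eq0 => /eqP <-.
Qed.

Lemma uniq_proj (R : realType) (n : nat) (N : 'rV[R]_n -> R) (hN : is_norm N)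
  m (v : 'I_m -> 'rV[R]_n) (hb : unit_ball N = conv_hull v)
  (hext : forall i, extreme (unit_ball N) (v i)) (Y : 'M[R]_n)
  (hgp : forall m (v : 'I_m -> 'rV[R]_n),
     (forall i, extreme (unit_ball N) (v i)) -> gen_pos2 Y (span_of v))
  (P Q : 'M[R]_n) :
  is_projection Y P -> is_projection Y Q -> G N v P <= 1 -> G N v Q <= 1 -> P = Q.
Proof.
move=> hP hQ hGP hGQ.
apply/eqP; rewrite -subr_eq0; apply/eqP; set D := P - Q.
suff H : forall x : 'rV[R]_n, x *m D = 0.
  apply/row_matrixP => i; rewrite row0.
  by rewrite -[D]mul1mx row_mul; apply: H.
move=> x; apply/eqP/negPn/negP => hx0.
set y0 := x *m D.
have hy0Y : (y0 <= Y)%MS.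
  rewrite /y0 /D mulmxBr; apply: addmx_sub; first exact: proj_sub hP.
  by rewrite -scaleN1r; apply: scalemx_sub; exact: proj_sub hQ.
have Ny0 := N_gt0 hN hx0.
set y := (N y0)^-1 *: y0.
have Ny : N y = 1.
  rewrite (NZp hN); last by rewrite invr_ge0 ltW.
  by rewrite mulVf ?gt_eqF.
have hyY : (y <= Y)%MS by apply: scalemx_sub.
have y0y : y0 = N y0 *: y by rewrite /y scalerA mulfV ?gt_eqF // scale1r.
have yn0 : y != 0.
  by apply/eqP => e; move: Ny; rewrite e (N0 hN) => /eqP; rewrite eq_sym oner_eq0.
have Ny1 : N y <= 1 by rewrite Ny.
have [w [w0 w1 ey]] := conv_mem hb Ny1.
have [u [fy hu]] := norming hN yn0.
rewrite Ny in fy.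
have actP := active hN hb hP hGP hyY w0 w1 ey fy hu.
have actQ := active hN hb hQ hGQ hyY w0 w1 ey fy hu.
have [i1 wi1] : exists i1, 0 < w i1.
  apply: contrapT => H.
  have : \sum_i w i = 0.
    apply: big1 => i _; apply/eqP; rewrite eq_le w0 andbT leNgt; apply/negP => wi.
    by apply: H; exists i.
  by rewrite w1 => /eqP; rewrite oner_eq0.
set uf := fun i => if 0 < w i then v i else v i1.
have hextU : forall i, extreme (unit_ball N) (uf i).
  by move=> i; rewrite /uf; case: ifP.
have hgp' := hgp m uf hextU.
set S := span_of uf.
have hyS : (y <= S)%MS.
  apply/submxP; exists (\row_i w i); apply/rowP => j.
  rewrite ey summxE !mxE; apply: eq_bigr => i _; rewrite !mxE /uf.
  case: ifP => // /negbT; rewrite -leNgt => wi.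
  have -> : w i = 0 by apply/eqP; rewrite eq_le wi w0.
  by rewrite !mul0r.
have hfull : row_full (Y + S)%MS.
  have hcap : (y <= Y :&: S)%MS by rewrite sub_capmx hyY hyS.
  have r1 := mxrankS hcap; rewrite rank_rV yn0 in r1.
  have := mxrank_sum_cap Y S; move: hgp'; rewrite /gen_pos2 /row_full => ->.
  move: r1; have := rank_leq_col Y; have := rank_leq_col S.
  move=> a b c d; rewrite -/S in d *; apply/eqP; simpl in c; lia.
have YD : Y *m D = 0 by rewrite /D mulmxBr (proj_fix hP) (proj_fix hQ) subrr.
have SD : S *m D *m u = 0.
  apply/matrixP => i j; rewrite ord1 [RHS]mxE.
  have -> : (S *m D *m u) i 0 = fv u (uf i *m D).
    rewrite /fv -[in LHS]mulmxA.
    have -> : (S *m (D *m u)) i 0 = (row i S *m (D *m u)) 0 0.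
      by rewrite -row_mul [RHS]mxE.
    have -> : row i S = uf i by apply/rowP => k; rewrite !mxE.
    by rewrite mulmxA.
  rewrite /D mulmxBr fvB /uf; case: ifP => wi.
  - by rewrite actP // actQ // subrr.
  - by rewrite actP // actQ // subrr.
have : fv u y0 = 0.
  have := submx_full x hfull; move=> /sub_addsmxP [[a b] /= ex].
  have YD' : Y *m (D *m u) = 0 by rewrite mulmxA YD mul0mx.
  have SD' : S *m (D *m u) = 0 by rewrite mulmxA SD.
  rewrite /y0 ex /fv !mulmxDl -!mulmxA YD' SD' !mulmx0 addr0 mxE.
  by [].
rewrite y0y fvZ fy mulr1 => /eqP; rewrite gt_eqF //.
Qed.
Lemma lip_cont (R : realType) d (f : 'rV[R]_d -> R) (C : R) :
  (forall x y, `|f x - f y| <= C * `|x - y|) -> continuous f.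
Proof.
move=> H x; apply/(@cvgrPdist_lt _ _ _ (nbhs x) (nbhs_filter x)) => e e0.
have C1 : 0 < `|C| + 1 by rewrite ltr_wpDl.
have d0 : 0 < e / (`|C| + 1) by rewrite divr_gt0.
near=> y.
have hy : `|x - y| < e / (`|C| + 1).
  by near: y; apply: cvgr_dist_lt => //; exact: cvg_id.
apply: le_lt_trans (H x y) _.
have h1 : C * `|x - y| <= `|C| * `|x - y|.
  by apply: ler_wpM2r; [exact: normr_ge0|exact: ler_norm].
apply: le_lt_trans h1 _.
have H2 : (`|C| + 1) * `|x - y| < (`|C| + 1) * (e / (`|C| + 1)) by rewrite ltr_pM2l.
move: H2; rewrite mulrCA mulfV ?gt_eqF // mulr1 => H2.
apply: le_lt_trans H2.
by rewrite ler_wpM2r // lerDl.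
Unshelve. all: by end_near.
Qed.
Section MxNorm.
Variable R : realType.

Lemma entry_le p q (A : 'M[R]_(p, q)) i j : `|A i j| <= `|A|.
Proof.
rewrite (_ : `|A| = mx_norm A) // mx_normrE.
exact: (le_bigmax _ (fun ij : 'I_p * 'I_q => `|A ij.1 ij.2|) (i, j)).
Qed.

Lemma mx_le p q (A : 'M[R]_(p, q)) M : 0 <= M -> (forall i j, `|A i j| <= M) -> `|A| <= M.
Proof.
move=> M0 H; rewrite (_ : `|A| = mx_norm A) // mx_normrE.
by apply: bigmax_le => // -[i j] _; apply: H.
Qed.

Definition Ksum p q (A : 'M[R]_(p, q)) : R := \sum_i \sum_j `|A i j|.

Lemma Ksum_ge0 p q (A : 'M[R]_(p, q)) : 0 <= Ksum A.
Proof. by apply: sumr_ge0 => i _; apply: sumr_ge0. Qed.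

Lemma mul_bound_l p q r (A : 'M[R]_(p, q)) (B : 'M[R]_(q, r)) :
  `|A *m B| <= Ksum A * `|B|.
Proof.
apply: mx_le; first by apply: mulr_ge0; [exact: Ksum_ge0|exact: normr_ge0].
move=> i j; rewrite mxE; apply: le_trans (ler_norm_sum _ _ _) _.
apply: (@le_trans _ _ ((\sum_l `|A i l|) * `|B|)).
  rewrite mulr_suml; apply: ler_sum => l _; rewrite normrM.
  by apply: ler_wpM2l => //; apply: entry_le.
apply: ler_wpM2r => //; rewrite /Ksum (bigD1 i) //= lerDl.
by apply: sumr_ge0 => k _; apply: sumr_ge0.
Qed.

Lemma mul_bound_r p q r (A : 'M[R]_(p, q)) (B : 'M[R]_(q, r)) :
  `|A *m B| <= `|A| * Ksum B.
Proof.
apply: mx_le; first by apply: mulr_ge0; [exact: normr_ge0|exact: Ksum_ge0].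
move=> i j; rewrite mxE; apply: le_trans (ler_norm_sum _ _ _) _.
apply: (@le_trans _ _ (`|A| * \sum_l `|B l j|)).
  rewrite mulr_sumr; apply: ler_sum => l _; rewrite normrM.
  by apply: ler_wpM2r => //; apply: entry_le.
apply: ler_wpM2l => //.
apply: (@le_trans _ _ (\sum_l \sum_k `|B l k|)).
  by apply: ler_sum => l _; rewrite (bigD1 j) //= lerDl sumr_ge0.
by [].
Qed.

Lemma vec_bound p q (d : 'rV[R]_(p * q)) : `|vec_mx d| <= `|d|.
Proof.
apply: mx_le => // i j.
have -> : vec_mx d i j = d 0 (mxvec_index i j) by rewrite -{2}(vec_mxK d) mxvecE.
exact: entry_le.
Qed.

End MxNorm.
Section Exist.
Variables (R : realType) (n : nat) (N : 'rV[R]_n -> R).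
Hypothesis hN : is_norm N.
Variables (m : nat) (v : 'I_m -> 'rV[R]_n).
Hypothesis hb : unit_ball N = conv_hull v.
Variable Y : 'M[R]_n.

Definition CN := \sum_j N ('e_j : 'rV[R]_n).

Lemma CN_ge0 : 0 <= CN.
Proof. by apply: sumr_ge0 => j _; apply: N_ge0. Qed.

Lemma N_le x : N x <= CN * `|x|.
Proof.
rewrite {1}(row_sum_delta x); apply: le_trans (N_sum hN _) _.
rewrite /CN mulr_suml; apply: ler_sum => j _; rewrite (NZ hN) mulrC.
by apply: ler_wpM2l; [exact: N_ge0|exact: entry_le].
Qed.

Lemma Ne_le j : N ('e_j : 'rV[R]_n) <= CN.
Proof. by rewrite /CN (bigD1 j) //= lerDl sumr_ge0 // => k _; apply: N_ge0. Qed.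

Definition Mv := \sum_i `|v i|.

Lemma norm_le x : `|x| <= Mv * N x.
Proof.
have [->|x0] := eqVneq x 0; first by rewrite normr0 (N0 hN) mulr0.
have Nx0 := N_gt0 hN x0.
set z := (N x)^-1 *: x.
have Nz : N z <= 1.
  rewrite /z (NZp hN); last by rewrite invr_ge0 ltW.
  by rewrite mulVf ?gt_eqF.
have [w [w0 w1 ez]] := conv_mem hb Nz.
have hz : `|z| <= Mv.
  rewrite ez; apply: le_trans (ler_norm_sum _ _ _) _; apply: ler_sum => i _.
  rewrite normrZ ger0_norm // -[leRHS]mul1r; apply: ler_wpM2r => //.
  by rewrite -w1 (bigD1 i) //= lerDl sumr_ge0.
have xz : x = N x *: z by rewrite /z scalerA mulfV ?gt_eqF // scale1r.
rewrite {1}xz normrZ ger0_norm; last exact: ltW.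
by rewrite mulrC; apply: ler_wpM2r => //; apply: ltW.
Qed.

Definition CG := \sum_i CN * Ksum (v i).

Lemma CG_ge0 : 0 <= CG.
Proof. by apply: sumr_ge0 => i _; apply: mulr_ge0; [exact: CN_ge0|exact: Ksum_ge0]. Qed.

Lemma G_lip P Q : G N v P <= G N v Q + CG * `|P - Q|.
Proof.
apply: G_le.
  by apply: addr_ge0; [exact: G_ge0|apply: mulr_ge0; [exact: CG_ge0|exact: normr_ge0]].
move=> i.
have -> : v i *m P = v i *m Q + v i *m (P - Q) by rewrite mulmxBr addrC subrK.
apply: le_trans (N_tri hN _ _) _; apply: lerD; first exact: G_ge.
apply: le_trans (N_le _) _.
apply: le_trans (_ : CN * (Ksum (v i) * `|P - Q|) <= _).
  by apply: ler_wpM2l; [exact: CN_ge0|exact: mul_bound_l].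
rewrite mulrA; apply: ler_wpM2r => //.
rewrite /CG (bigD1 i) //= lerDl; apply: sumr_ge0 => k _.
by apply: mulr_ge0; [exact: CN_ge0|exact: Ksum_ge0].
Qed.

Lemma G_abs P Q : `|G N v P - G N v Q| <= CG * `|P - Q|.
Proof.
rewrite ler_norml; apply/andP; split.
- have := G_lip Q P; rewrite -normrN opprB; lra.
- have := G_lip P Q; lra.
Qed.

Definition Gv (d : 'rV[R]_(n * n)) := G N v (vec_mx d).

Lemma vec_mxB p q (x y : 'rV[R]_(p * q)) : vec_mx x - vec_mx y = vec_mx (x - y).
Proof. by apply/matrixP => i j; rewrite !mxE. Qed.

Lemma Gv_cont : continuous Gv.
Proof.
apply: (@lip_cont _ _ _ CG) => x y; rewrite /Gv.
apply: le_trans (G_abs _ _) _; rewrite vec_mxB.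
by apply: ler_wpM2l; [exact: CG_ge0|exact: vec_bound].
Qed.

Definition Phi (d : 'rV[R]_(n * n)) :=
  `|vec_mx d *m cokermx Y| + `|Y *m vec_mx d - Y|.

Lemma Phi_cont : continuous Phi.
Proof.
apply: (@lip_cont _ _ _ (Ksum (cokermx Y) + Ksum Y)) => x y; rewrite /Phi.
rewrite (_ : forall a b c d : R, a + b - (c + d) = (a - c) + (b - d)); last first.
  by move=> a b c d; rewrite opprD addrACA.
apply: le_trans (ler_normD _ _) _; rewrite mulrDl; apply: lerD.
- apply: le_trans (ler_dist_dist _ _) _.
  rewrite -mulmxBl vec_mxB; apply: le_trans (mul_bound_r _ _) _.
  by rewrite mulrC; apply: ler_wpM2l; [exact: Ksum_ge0|exact: vec_bound].
- apply: le_trans (ler_dist_dist _ _) _.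
  rewrite (_ : Y *m vec_mx x - Y - (Y *m vec_mx y - Y) = Y *m vec_mx (x - y)); last first.
    by rewrite opprB addrA subrK -mulmxBr vec_mxB.
  apply: le_trans (mul_bound_l _ _) _.
  by apply: ler_wpM2l; [exact: Ksum_ge0|exact: vec_bound].
Qed.

Lemma proj_Phi P : is_projection Y P <-> Phi (mxvec P) = 0.
Proof.
rewrite /Phi mxvecK; split.
- move=> hP; have [hPY _] := hP.
  have -> : P *m cokermx Y = 0 by apply/eqP; rewrite -submxE.
  by rewrite (proj_fix hP) subrr normr0 addr0.
- move=> /eqP; rewrite paddr_eq0 // !normr_eq0 subr_eq0 => /andP [/eqP h1 /eqP h2].
  split; first by rewrite submxE h1.
  by move=> y /submxP [a ->]; rewrite -mulmxA h2.
Qed.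

Lemma Mv_ge0 : 0 <= Mv.
Proof. by apply: sumr_ge0 => i _; exact: normr_ge0. Qed.

Lemma bound_A d : Phi d = 0 -> Gv d <= 2 -> `|d| <= Mv * (2 * CN).
Proof.
move=> hphi hG.
have hP : is_projection Y (vec_mx d) by apply/proj_Phi; rewrite vec_mxK.
apply: mx_le; first by apply: mulr_ge0; [exact: Mv_ge0|apply: mulr_ge0; [|exact: CN_ge0]].
move=> i k; rewrite (ord1 i).
case/(@mxvec_indexP n n): k => a b.
have -> : d 0 (mxvec_index a b) = ((delta_mx 0 a : 'rV[R]_n) *m (vec_mx d : 'M[R]_n)) 0 b.
  by rewrite -rowE mxE -{1}(vec_mxK d) mxvecE.
apply: le_trans (entry_le _ _ _) _.
apply: le_trans (norm_le _) _; apply: ler_wpM2l; first exact: Mv_ge0.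
apply: le_trans (G_bound hN hb _ _) _.
apply: ler_pM => //; [exact: G_ge0|exact: N_ge0|exact: Ne_le].
Qed.

Lemma exist_min : (exists P, is_projection Y P /\ G N v P <= 2) ->
  exists P, is_projection Y P /\ forall Q, is_projection Y Q -> G N v P <= G N v Q.
Proof.
move=> [P1 [hP1 hG1]].
set A := Phi @^-1` [set 0] `&` Gv @^-1` [set x | x <= 2].
have A0 : A !=set0.
  exists (mxvec P1); split; first by apply/proj_Phi.
  by rewrite /= /Gv mxvecK.
have cA : compact A.
  apply: bounded_closed_compact.
    exists (Mv * (2 * CN)); split; first exact: num_real.
    move=> M hM x [hx1 hx2]; apply: le_trans (ltW hM).
    exact: bound_A.
  apply: closedI.
    by apply: (proj1 (continuous_closedP _) Phi_cont); apply: closed_eq.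
  by apply: (proj1 (continuous_closedP _) Gv_cont); apply: closed_le.
have [c cinA cmin] := EVT_min_rV A0 cA (continuous_subspaceT Gv_cont).
move: cinA; rewrite inE => -[hc1 hc2].
exists (vec_mx c); split.
  by apply/proj_Phi; rewrite vec_mxK.
move=> Q hQ.
case: (leP (G N v Q) 2) => hQ2.
- have := cmin (mxvec Q); rewrite /Gv mxvecK; apply; rewrite inE; split => //.
  + exact/proj_Phi.
  + by rewrite /= /Gv mxvecK.
- by apply: le_trans (ltW hQ2); exact: hc2.
Qed.

End Exist.
Theorem mainTheorem7 (R : realType) (n : nat) (N : 'rV[R]_n -> R)
  (k : nat) (Y : 'M[R]_n) :
  is_norm N -> polyhedral N ->
  \rank Y = k -> (1 <= k)%N -> (k <= n - 1)%N ->
  in_general_position N Y ->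
  proj_const N Y = 1 ->
  exists P : 'M[R]_n, [/\ is_projection Y P, op_norm N P = 1 &
    forall Q : 'M[R]_n, is_projection Y Q -> op_norm N Q = 1 -> Q = P].
Proof.
move=> hN [m0 [v0 hb0]] hrk hk1 hkn [hgp _] hlam.
have [m [v [hb hext]]] := reduce_ext hb0.
set E := [set op_norm N P | P in is_projection Y].
have hinfE : inf E = 1 by [].
have Elb : lbound E 0.
  by move=> _ [P _ <-]; rewrite (opG hN hb); exact: G_ge0.
have hE : E !=set0.
  apply: contrapT => H.
  have E0 : E = set0.
    by apply/seteqP; split => x Ex //; exfalso; apply: H; exists x.
  by move: hinfE; rewrite E0 inf0 => /eqP; rewrite eq_sym oner_eq0.
have hinf : has_inf E by split => //; exists 0.
have [e [P1 hP1 he1] he] := inf_adherent ltr01 hinf.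
rewrite hinfE -he1 (opG hN hb) in he.
have [P [hP hmin]] := exist_min hN hb (ex_intro _ P1 (conj hP1 (ltW he))).
have GP1 : G N v P <= 1.
  rewrite -hinfE; apply: lb_le_inf => // _ [Q hQ <-].
  by rewrite (opG hN hb); apply: hmin.
have GP : 1 <= G N v P.
  by rewrite -hinfE -(opG hN hb); apply: ge_inf; [exists 0|exists P].
exists P; split => //.
  by rewrite (opG hN hb); apply/le_anti; rewrite GP1 GP.
move=> Q hQ hQ1.
apply: (uniq_proj hN hb hext hgp hQ hP) => //.
by rewrite -(opG hN hb) hQ1.
Qed.
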